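(* Let $k\ge 3$. A binary linear $[N,k,D]$ Griesmer code $C$ is self-orthogonal if and only if $C$ is doubly-even.
   Context: A binary linear $[N,k,D]$ code is a Griesmer code if $N=\sum_{i=0}^{k-1}\lceil D/2^i\rceil$. A binary code is self-orthogonal if $C\subseteq C^\perp$ (standard inner product over $\mathbb{F}_2$). A binary code is doubly-even if every codeword has Hamming weight divisible by $4$. *)

(* Defs.v *)
From HB Require Import structures.
From mathcomp Require Import all_boot all_order all_algebra.
Set Implicit Arguments. Unset Strict Implicit. Unset Printing Implicit Defensive.
Import GRing.Theory.
Local Open Scope ring_scope.

Definition hwt (N : nat) (v : 'rV['F_2]_N) : nat := #|[set i | v 0 i != 0]|.

Definition dotF2 (N : nat) (u v : 'rV['F_2]_N) : 'F_2 := \sum_(i < N) u 0 i * v 0 i.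

Definition is_linear_code (N k D : nat) (C : {vspace 'rV['F_2]_N}) : Prop :=
  (\dim C = k)%N /\
  (exists2 c, c \in C & (c != 0) && (hwt c == D)) /\
  (forall c, c \in C -> c != 0 -> (D <= hwt c)%N).

Definition griesmer_sum (k D : nat) : nat :=
  (\sum_(i < k) ((D + 2 ^ i - 1) %/ 2 ^ i))%N.

Definition is_griesmer (N k D : nat) (C : {vspace 'rV['F_2]_N}) : Prop :=
  is_linear_code k D C /\ N = griesmer_sum k D.

Definition self_orthogonal (N : nat) (C : {vspace 'rV['F_2]_N}) : Prop :=
  forall u v, u \in C -> v \in C -> dotF2 u v = 0.

Definition doubly_even (N : nat) (C : {vspace 'rV['F_2]_N}) : Prop :=
  forall c, c \in C -> (4 %| hwt c)%N.

(* Main.v *)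
Require Import Defs.
From HB Require Import structures.
From mathcomp Require Import all_boot all_order all_algebra zify.
Import GRing.Theory.
Set Implicit Arguments. Unset Strict Implicit. Unset Printing Implicit Defensive.
Local Open Scope ring_scope.

Lemma F2_cases (x : 'F_2) : x = 0 \/ x = 1.
Proof. case: x => [[|[|n]] Hn]; [left|right|]; try by apply/val_inj. by []. Qed.

Lemma F2_pt (x y : 'F_2) :
  ((x != 0%R) + ((x + y)%R != 0%R) = (y != 0%R) + 2 * ((y == 0%R) && (x != 0%R)))%N.
Proof. by case: x => [[|[|?]] ?] //; case: y => [[|[|?]] ?]. Qed.

Lemma F2_add (x y : 'F_2) :
  ((x != 0%R) + (y != 0%R) = ((x + y)%R != 0%R) + 2 * ((x != 0%R) && (y != 0%R)))%N.
Proof. by case: x => [[|[|?]] ?] //; case: y => [[|[|?]] ?]. Qed.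

Lemma F2_mul (x y : 'F_2) : x * y = ((x != 0%R) && (y != 0%R))%:R.
Proof. by case: x => [[|[|?]] ?] //; case: y => [[|[|?]] ?] //; apply/val_inj. Qed.

Lemma F2_nat n : (n%:R : 'F_2) = 0 <-> (2 %| n)%N.
Proof. have := val_Zp_nat (p:=2) isT n. rewrite /dvdn. move=> H; split.
 by move=> H2; rewrite H2 in H; rewrite -H.
move/eqP=> H2. apply/val_inj. rewrite /= H. by rewrite H2. Qed.

Lemma vv0 N (v : 'rV['F_2]_N) : v + v = 0.
Proof. apply/rowP => i; rewrite !mxE. by case: (v 0 i) => [[|[|?]] ?] //; apply/val_inj. Qed.

Lemma addKv N (u c : 'rV['F_2]_N) : u + c + c = u.
Proof. by rewrite -addrA vv0 addr0. Qed.

Lemma addv_eq0 N (u c : 'rV['F_2]_N) : u + c = 0 -> u = c.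
Proof. by move=> H; rewrite -(addKv u c) H add0r. Qed.

Definition wt N (S : {set 'I_N}) (v : 'rV['F_2]_N) := #|[set i in S | v 0 i != 0]|.
Definition resS N (S : {set 'I_N}) (c : 'rV['F_2]_N) := [set i in S | c 0 i == 0].

Lemma card_sum N (S : {set 'I_N}) (P : pred 'I_N) :
  #|[set i in S | P i]| = (\sum_(i in S) (P i : nat))%N.
Proof.
rewrite -sum1_card big_mkcond [RHS]big_mkcond /=; apply: eq_bigr => i _.
by rewrite !inE; case: (i \in S); case: (P i).
Qed.

Lemma card_sumT N (P : pred 'I_N) :
  #|[set i | P i]| = (\sum_i (P i : nat))%N.
Proof.
rewrite -sum1_card big_mkcond [RHS]big_mkcond /=; apply: eq_bigr => i _.
by rewrite !inE; case: (P i).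
Qed.

Lemma wt_resid N (S : {set 'I_N}) (u c : 'rV['F_2]_N) :
  (wt S u + wt S (u + c) = wt S c + 2 * wt (resS S c) u)%N.
Proof.
have -> : wt (resS S c) u = #|[set i in S | (c 0 i == 0) && (u 0 i != 0)]|.
  by apply: eq_card => i; rewrite /resS !inE andbA.
rewrite /wt !card_sum -big_split /= big_distrr -big_split /=.
by apply: eq_bigr => i _; rewrite mxE F2_pt.
Qed.

Lemma card_resid N (S : {set 'I_N}) (c : 'rV['F_2]_N) :
  #|S| = (#|resS S c| + wt S c)%N.
Proof.
rewrite /wt /resS !card_sum -sum1_card -big_split /=; apply: eq_bigr => i _.
by case: (c 0 i == 0).
Qed.

Definition inter N (u v : 'rV['F_2]_N) := #|[set i | (u 0 i != 0) && (v 0 i != 0)]|.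

Lemma hwtE N (v : 'rV['F_2]_N) : hwt v = wt [set: 'I_N] v.
Proof. by apply: eq_card => i; rewrite !inE. Qed.

Lemma hwt_add N (u v : 'rV['F_2]_N) : (hwt u + hwt v = hwt (u + v) + 2 * inter u v)%N.
Proof.
rewrite /hwt /inter !card_sumT -!big_split big_distrr -big_split /=.
by apply: eq_bigr => i _; rewrite mxE F2_add.
Qed.

Lemma dot_inter N (u v : 'rV['F_2]_N) : dotF2 u v = (inter u v)%:R.
Proof.
rewrite /dotF2 /inter.
rewrite card_sumT natr_sum; apply: eq_bigr => i _; exact: F2_mul.
Qed.

Lemma dot_self N (u : 'rV['F_2]_N) : dotF2 u u = (hwt u)%:R.
Proof. rewrite dot_inter /inter /hwt; congr (_%:R); apply: eq_card => i; by rewrite !inE andbb. Qed.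

Lemma wt0 N (S : {set 'I_N}) : wt S 0 = 0%N.
Proof. rewrite /wt; apply/eqP; rewrite cards_eq0; apply/eqP/setP => i; by rewrite !inE mxE eqxx andbF. Qed.

Lemma gs_rec m d : griesmer_sum m.+1 d = (d + griesmer_sum m (d.+1 %/ 2))%N.
Proof.
rewrite /griesmer_sum big_ord_recl /= expn0 divn1 addnK; congr (_ + _)%N.
apply: eq_bigr => i _; rewrite /= expnS divnMA; congr (_ %/ _)%N.
have : (0 < 2 ^ i)%N by rewrite expn_gt0.
move: (2 ^ i)%N => t Ht. lia.
Qed.

Lemma gs_mono m d d' : (d <= d')%N -> (griesmer_sum m d <= griesmer_sum m d')%N.
Proof.
move=> H; rewrite /griesmer_sum; apply: leq_sum => i _.
by apply: leq_div2r; rewrite leq_sub2r // leq_add2r.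
Qed.

Lemma gs_strict m d : (griesmer_sum m.+1 d < griesmer_sum m.+1 d.+1)%N.
Proof.
rewrite !gs_rec; have := @gs_mono m (d.+1 %/ 2) (d.+2 %/ 2).
have : (d.+1 %/ 2 <= d.+2 %/ 2)%N by lia. move=> H1 H2; have := H2 H1. lia.
Qed.

Lemma resid N (V : {vspace 'rV['F_2]_N}) c : c \in V -> c != 0 ->
  [/\ ((V :\: <[c]>) <= V)%VS, \dim (V :\: <[c]>) = (\dim V).-1,
      c \notin (V :\: <[c]>)%VS &
      forall v, v \in V -> exists2 u, u \in (V :\: <[c]>)%VS & (v = u \/ v = u + c)].
Proof.
move=> cV c0.
have cW : (<[c]> <= V)%VS by rewrite -memvE.
have E : (V :\: <[c]> + <[c]>)%VS = V.
  by rewrite -{2}(addv_diff_cap V <[c]>); congr (_ + _)%VS; apply/esym/capv_idPr.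
split.
- exact: diffvSl.
- have := dimv_disjoint_sum (capv_diff V <[c]>). rewrite E dim_vline c0 addn1 => ->. by [].
- apply/negP => H. have : c \in ((V :\: <[c]>) :&: <[c]>)%VS by rewrite memv_cap H memv_line.
  by rewrite capv_diff memv0 (negbTE c0).
- move=> v; rewrite -{1}E => /memv_addP [u uW [x /vlineP [k ->] ->]].
  exists u => //. case: (F2_cases k) => ->; [left; by rewrite scale0r addr0 | right; by rewrite scale1r].
Qed.

Lemma half_le e f : (e <= 2 * f)%N -> (e.+1 %/ 2 <= f)%N.
Proof. lia. Qed.
Lemma half_add4 d : (d.+4.+1 %/ 2 = (d.+1 %/ 2).+2)%N.
Proof. lia. Qed.

Lemma ar1 a b e f : (a + b = e + 2*f)%N -> (e <= b)%N -> (e <= a)%N -> (e <= 2*f)%N.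
Proof. lia. Qed.
Lemma ar2 a b d f : (a + b = d + 2*f)%N -> (d.+2 <= b)%N -> (d.+2 <= a)%N -> (d.+4 <= 2*f)%N.
Proof. lia. Qed.
Lemma ar3 d : (d.+2 <= d)%N -> False.
Proof. lia. Qed.

Lemma min_wt N (S : {set 'I_N}) (V : {vspace 'rV['F_2]_N}) : (0 < \dim V)%N ->
  exists c, [/\ c \in V, c != 0 & forall v, v \in V -> v != 0 -> (wt S c <= wt S v)%N].
Proof.
move=> H.
have ex : exists n, [exists v, [&& v \in V, v != 0 & wt S v == n]].
  exists (wt S (vpick V)); apply/existsP; exists (vpick V).
  by rewrite memv_pick vpick0 -dimv_eq0 -lt0n H eqxx.
case: (ex_minnP ex) => w /existsP [c /and3P [cV c0 /eqP cw]] Hmin.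
exists c; split => // v vV v0; rewrite cw; apply: Hmin; apply/existsP; exists v.
by rewrite vV v0 eqxx.
Qed.

Lemma griesmer_bound N m : forall (S : {set 'I_N}) (V : {vspace 'rV['F_2]_N}) d,
  \dim V = m -> (forall v, v \in V -> v != 0 -> (d <= wt S v)%N) ->
  (griesmer_sum m d <= #|S|)%N.
Proof.
elim: m => [|m IH] S V d dV Hd; first by rewrite /griesmer_sum big_ord0.
have [c [cV c0 cmin]] := min_wt S (ltac:(by rewrite dV) : (0 < \dim V)%N).
have dw : (d <= wt S c)%N by apply: Hd.
apply: leq_trans (gs_mono m.+1 dw) _.
have [WV dW cW Hdec] := resid cV c0.
rewrite gs_rec (card_resid S c) addnC leq_add2r.
apply: (IH _ (V :\: <[c]>)%VS); first by rewrite dW dV.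
move=> u uW u0.
have uV : u \in V by apply: (subvP WV).
have ucV : u + c \in V by rewrite memvD.
have uc0 : u + c != 0.
  apply/negP => /eqP /addv_eq0 E; move: uW; rewrite E => uW; by rewrite uW in cW.
apply: half_le.
have := cmin _ uV u0; have := cmin _ ucV uc0; have := wt_resid S u c.
move=> /ar1 H /H; exact.
Qed.

Lemma lemA N m : forall (S : {set 'I_N}) (V : {vspace 'rV['F_2]_N}) (Q : pred 'rV['F_2]_N) d,
  \dim V = m -> (forall v, v \in V -> v != 0 -> (d <= wt S v)%N) ->
  (forall v, v \in V -> ~~ Q v -> (d.+2 <= wt S v)%N) ->
  (forall u v, u \in V -> v \in V -> Q u -> Q v -> Q (u + v)) ->
  (exists2 v, v \in V & ~~ Q v) ->
  (griesmer_sum m d < #|S|)%N.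
Proof.
elim: m => [|m IH] S V Q d dV Hd HQ Hcl [v0 v0V v0Q].
  have : v0 = 0 by apply/eqP; rewrite -memv0; move/eqP: dV; rewrite dimv_eq0 => /eqP <-.
  move=> E; have := HQ _ v0V v0Q; by rewrite E wt0.
have [c [cV c0 cmin]] := min_wt S (ltac:(by rewrite dV) : (0 < \dim V)%N).
have dw : (d <= wt S c)%N by apply: Hd.
case: (ltnP d (wt S c)) => [dlt|dge].
  apply: leq_trans (gs_strict m d) _.
  apply: (@griesmer_bound N m.+1 S V d.+1 dV) => v vV vnz. exact: leq_trans dlt (cmin _ vV vnz).
have cd : wt S c = d by apply/eqP; rewrite eqn_leq dge dw.
have Qc : Q c.
  apply/negPn/negP => nQ; have := HQ _ cV nQ; rewrite cd; exact: ar3.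
have [WV dW cW Hdec] := resid cV c0.
rewrite gs_rec (card_resid S c) cd addnC ltn_add2r.
have memWV : forall u, u \in (V :\: <[c]>)%VS -> u \in V by move=> u; apply: (subvP WV).
apply: (IH _ (V :\: <[c]>)%VS Q).
- by rewrite dW dV.
- move=> u uW u0.
  have uV := memWV _ uW.
  have ucV : u + c \in V by rewrite memvD.
  have uc0 : u + c != 0.
    apply/negP => /eqP /addv_eq0 E; move: uW; rewrite E => uW; by rewrite uW in cW.
  apply: half_le.
  have := Hd _ uV u0; have := Hd _ ucV uc0; have := wt_resid S u c; rewrite cd.
  move=> /ar1 H /H; exact.
- move=> u uW nQu.
  have uV := memWV _ uW.
  have ucV : u + c \in V by rewrite memvD.
  have nQuc : ~~ Q (u + c).
    apply/negP => Quc; move: (Hcl _ _ ucV cV Quc Qc); rewrite addKv; by rewrite (negbTE nQu).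
  rewrite -half_add4; apply: half_le.
  have := HQ _ uV nQu; have := HQ _ ucV nQuc; have := wt_resid S u c; rewrite cd.
  move=> /ar2 H /H; exact.
- move=> u v uW vW; apply: Hcl; exact: memWV.
- have [u uW [E|E]] := Hdec _ v0V.
    by exists u => //; rewrite -E.
  exists u => //; apply/negP => Qu; move: v0Q; by rewrite E (Hcl _ _ (memWV _ uW) cV Qu Qc).
Qed.
Lemma ar4 a b e f : (a + b = e + 2*f)%N -> (2 %| f)%N -> (4 %| a)%N -> (4 %| b)%N -> (4 %| e)%N.
Proof. lia. Qed.
Lemma ar5 D x : (4 %| D)%N -> ~~ (4 %| x)%N -> (2 %| x)%N -> (D <= x)%N -> (D.+2 <= x)%N.
Proof. lia. Qed.
Lemma ar6 D a b f g : (a + b = D + 2*g)%N -> (a + b = D + 2*f)%N -> (2 %| f)%N ->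
  (2 %| a)%N -> (2 %| b)%N -> (D <= a)%N -> (D <= b)%N -> (2 %| D)%N -> ~~ (4 %| D)%N ->
  ((D.+1 %/ 2).+1 <= g)%N.
Proof. lia. Qed.
Lemma ar7 a b e f : (a + b = e + 2*f)%N -> (4 %| a)%N -> (4 %| b)%N -> (4 %| e)%N -> (2 %| f)%N.
Proof. lia. Qed.
Lemma ar8 s D y z : (s + D = D + y)%N -> (z <= s)%N -> (y < z)%N -> False.
Proof. lia. Qed.

Lemma hwt0 N : hwt (0 : 'rV['F_2]_N) = 0%N.
Proof. by rewrite hwtE wt0. Qed.

Theorem proposition3p8 (N k D : nat) (C : {vspace 'rV['F_2]_N}) :
  (3 <= k)%N -> is_griesmer k D C ->
  (self_orthogonal C <-> doubly_even C).
Proof.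
move=> Hk [[Hdim [[c0 c0C /andP [c00 /eqP c0w]] Hmin]] HN].
split; last first.
  move=> DE u v uC vC; rewrite dot_inter; apply/F2_nat.
  have := DE _ (memvD uC vC); have := DE _ vC; have := DE _ uC; have := hwt_add u v.
  move=> H1 H2 H3 H4; exact: ar7 H1 H2 H3 H4.
move=> SO.
have Hev : forall u, u \in C -> (2 %| hwt u)%N.
  by move=> u uC; apply/F2_nat; rewrite -dot_self; exact: SO.
have Hin : forall u v, u \in C -> v \in C -> (2 %| inter u v)%N.
  by move=> u v uC vC; apply/F2_nat; rewrite -dot_inter; exact: SO.
have Hcl : forall u v, u \in C -> v \in C -> (4 %| hwt u)%N -> (4 %| hwt v)%N -> (4 %| hwt (u+v))%N.
  move=> u v uC vC; apply: ar4; [exact: hwt_add | exact: Hin].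
move=> c1 c1C; apply/negPn/negP => nc1.
case: (boolP (4 %| D)%N) => HD.
  have := @lemA N k [set: 'I_N] C (fun v => (4 %| hwt v)%N) D Hdim.
  rewrite cardsT card_ord -HN ltnn => H; suff : false by []; apply: H.
  - move=> v vC v0; rewrite -hwtE; exact: Hmin.
  - move=> v vC nQ; rewrite -hwtE.
    have v0 : v != 0 by apply: contraNneq nQ => ->; rewrite hwt0.
    exact: ar5 HD nQ (Hev _ vC) (Hmin _ vC v0).
  - move=> u v uC vC; exact: Hcl.
  - by exists c1.
have [WV dW cW Hdec] := resid c0C c00.
set S' := resS [set: 'I_N] c0.
have Hc : forall u, u \in (C :\: <[c0]>)%VS -> u != 0 -> ((D.+1 %/ 2).+1 <= wt S' u)%N.
  move=> u uW u0. have uC : u \in C by apply: (subvP WV).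
  have ucC : u + c0 \in C by rewrite memvD.
  have uc0 : u + c0 != 0.
    apply/negP => /eqP /addv_eq0 E; move: uW; rewrite E => uW; by rewrite uW in cW.
  have E := wt_resid [set: 'I_N] u c0. rewrite -!hwtE c0w in E.
  have := hwt_add u (u + c0). rewrite addrA vv0 add0r c0w => E2.
  have := Hev _ c0C; rewrite c0w => HD2.
  exact: ar6 E E2 (Hin _ _ uC ucC) (Hev _ uC) (Hev _ ucC) (Hmin _ uC u0) (Hmin _ ucC uc0) HD2 HD.
have := @griesmer_bound N k.-1 S' (C :\: <[c0]>)%VS (D.+1 %/ 2).+1.
rewrite dW Hdim => /(_ erefl Hc) Hg.
have := card_resid [set: 'I_N] c0. rewrite cardsT card_ord -hwtE c0w -/S' => EN.
move: HN; rewrite EN.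
case: k Hk Hdim Hg => [|[|k']] // Hk _ Hg.
rewrite gs_rec => HN.
exact: ar8 HN Hg (gs_strict k' (D.+1 %/ 2)).
Qed.
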